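(* Let $s\ge2$ groups of positive integer moduli be given: Group $j$ ($1\le j\le s$) consists of $L_j\ge1$ moduli $0<M_{j,1}<\dots<M_{j,L_j}$; put $\delta_j=\operatorname{lcm}(M_{j,1},\dots,M_{j,L_j})$ and assume $\delta_1,\dots,\delta_s$ pairwise distinct. Let $N$ be an integer with $0\le N<\operatorname{lcm}(\delta_1,\dots,\delta_s)$, let $r_{j,i}$ be the remainder of $N$ modulo $M_{j,i}$ and $n_{j,i}=(N-r_{j,i})/M_{j,i}$. Let $G_j=\max_{1\le i\le L_j}\min_{q\ne i}\gcd(M_{j,i},M_{j,q})/4$ if $L_j\ge2$, $G_j=M_{j,1}/4$ if $L_j=1$, and let $k$ be an index with $$G:=\min_{q\ne k}\frac{\gcd(\delta_k,\delta_q)}{4}=\max_{1\le i\le s}\min_{q\ne i}\frac{\gcd(\delta_i,\delta_q)}{4}.$$ Let $\tilde r_{j,i}$ be integers with $0\le\tilde r_{j,i}\le M_{j,i}-1$ and $|\tilde r_{j,i}-r_{j,i}|\le\tau_j$, where $$\tau_k<\min(G_k,G),\qquad \tau_j<\min\Big(G_j,\ \frac{\gcd(\delta_j,\delta_k)}{2}-\min(G_k,G)\Big)\ \ (j\ne k).$$ Then the two-stage algorithm (described in the context) with stage-2 reference index $k$ outputs $\hat n_{j,i}=n_{j,i}$ for all $1\le i\le L_j$, $1\le j\le s$.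
   Context: For $x\in\mathbb R$, $[x]$ denotes the unique integer with $-1/2\le x-[x]<1/2$. Single-stage algorithm $\mathcal A$: for pairwise distinct positive integers $P_1,\dots,P_m$ ($m\ge2$), a reference index $k$ and integers $x_1,\dots,x_m$: for $i\ne k$ put $m_{ki}=\gcd(P_k,P_i)$, $\Gamma_{ki}=P_k/m_{ki}$, $\Gamma_{ik}=P_i/m_{ki}$, $\hat q_{ik}=[(x_i-x_k)/m_{ki}]$, let $\bar\Gamma_{ki}$ be an inverse of $\Gamma_{ki}$ modulo $\Gamma_{ik}$ and $\hat\xi_{ik}\equiv\hat q_{ik}\bar\Gamma_{ki}\pmod{\Gamma_{ik}}$, $0\le\hat\xi_{ik}<\Gamma_{ik}$; let $\hat n_k$ be the least nonnegative $y$ with $y\equiv\hat\xi_{ik}\pmod{\Gamma_{ik}}$ for all $i\ne k$ (the algorithm fails if none exists), and $\hat n_i=(\hat n_k\Gamma_{ki}-\hat q_{ik})/\Gamma_{ik}$ for $i\ne k$. Two-stage algorithm with stage-2 reference index $k$: Stage 1: for each group $j$, if $L_j\ge2$ apply $\mathcal A$ to $M_{j,1},\dots,M_{j,L_j}$ with inputs $\tilde r_{j,1},\dots,\tilde r_{j,L_j}$ and a reference index attaining $\max_i\min_{q\ne i}\gcd(M_{j,i},M_{j,q})$, obtaining $\hat K_{j,1},\dots,\hat K_{j,L_j}$; if $L_j=1$ set $\hat K_{j,1}=0$. Put $\hat N_j=[\frac1{L_j}\sum_{i=1}^{L_j}(\hat K_{j,i}M_{j,i}+\tilde r_{j,i})]$.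 Stage 2: apply $\mathcal A$ to $\delta_1,\dots,\delta_s$ with inputs $\hat N_1,\dots,\hat N_s$ and reference index $k$, obtaining $\hat l_1,\dots,\hat l_s$. Output $\hat n_{j,i}=\hat l_j\delta_j/M_{j,i}+\hat K_{j,i}$. *)

(* Defs.v *)
From mathcomp Require Import all_boot all_order all_algebra.
Set Implicit Arguments. Unset Strict Implicit. Unset Printing Implicit Defensive.
Import Order.TTheory GRing.Theory Num.Theory.
Local Open Scope ring_scope.

(* [a / d] for d > 0 : the unique integer z with -1/2 <= a/d - z < 1/2,
   i.e. floor(a/d + 1/2) = floor((2a + d) / (2d)). *)
Definition rnd (a : int) (d : nat) : int := divz (2 * a + d%:Z) (2 * d)%:Z.

Definition lcml (s : seq nat) : nat := foldr lcmn 1%N s.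

(* min_{q != i} gcd(P_i, P_q)  (meaningful when size P >= 2 and P positive;
   the identity element P_i is >= every gcd(P_i,P_q) when P_i > 0) *)
Definition minG (P : seq nat) (i : nat) : nat :=
  \big[minn/(nth 0%N P i)]_(q < size P | q != i :> nat) gcdn (nth 0%N P i) (nth 0%N P q).

Definition maxmin (P : seq nat) : nat := \max_(i < size P) minG P i.

Section AlgA.
Variables (P : seq nat) (k : nat) (x : seq int).
Definition mki (i : nat) : nat := gcdn (nth 0%N P k) (nth 0%N P i).
Definition Gki (i : nat) : nat := ((nth 0%N P k) %/ mki i)%N.
Definition Gik (i : nat) : nat := ((nth 0%N P i) %/ mki i)%N.
Definition qhat (i : nat) : int := rnd (x`_i - x`_k) (mki i).
(* an inverse of Gki modulo Gik, from the Bezout coefficients *)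
Definition barG (i : nat) : int := (egcdz (Gki i)%:Z (Gik i)%:Z).1.
Definition xihat (i : nat) : int := modz (qhat i * barG i) (Gik i)%:Z.
Definition others : seq nat := [seq i <- iota 0 (size P) | i != k].
Definition congr_ok (y : nat) : bool :=
  all (fun i => modz y%:Z (Gik i)%:Z == modz (xihat i) (Gik i)%:Z) others.
(* every solution is congruent to one in [0, lcm_i Gik), so the least
   nonnegative solution, if any, lies below this bound *)
Definition bound : nat := foldr (fun i acc => lcmn (Gik i) acc) 1%N others.
Definition nkhat : nat := find congr_ok (iota 0 bound).
Definition algA : option (seq int) :=
  if (nkhat < bound)%N then
    Some [seq (if i == k then nkhat%:Z
               else divz (nkhat%:Z * (Gki i)%:Z - qhat i) (Gik i)%:Z)
         | i <- iota 0 (size P)]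
  else None.
End AlgA.

(* group data: M is a list of s groups, group j is the list M_j of moduli *)
Definition delta (M : seq (seq nat)) : seq nat := map lcml M.

(* 4 * G_j *)
Definition G4 (Mj : seq nat) : nat :=
  if (2 <= size Mj)%N then maxmin Mj else (nth 0%N Mj 0).

Definition stage1 (M : seq (seq nat)) (rt : nat -> nat -> nat)
    (ref : nat -> nat) (j : nat) : option (seq int) :=
  let Mj := nth [::] M j in
  if (2 <= size Mj)%N then
    algA Mj (ref j) [seq (rt j i)%:Z | i <- iota 0 (size Mj)]
  else Some [:: 0].

Definition Nhat (Mj : seq nat) (rtj : nat -> nat) (K : seq int) : int :=
  rnd (\sum_(i < size Mj) (K`_i * ((nth 0%N Mj i))%:Z + (rtj i)%:Z)) (size Mj).

Definition twostage (M : seq (seq nat)) (rt : nat -> nat -> nat)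
    (ref : nat -> nat) (k : nat) : option (seq (seq int)) :=
  let Ks := [seq stage1 M rt ref j | j <- iota 0 (size M)] in
  if all (fun o => o != None) Ks then
    let K := [seq odflt [::] o | o <- Ks] in
    let Nh := [seq Nhat (nth [::] M j) (rt j) (nth [::] K j)
              | j <- iota 0 (size M)] in
    match algA (delta M) k Nh with
    | Some l =>
        Some [seq [seq l`_j * (((nth 0%N (delta M) j) %/ (nth 0%N (nth [::] M j) i))%N)%:Z
                        + (nth [::] K j)`_i
                  | i <- iota 0 (size (nth [::] M j))]
             | j <- iota 0 (size M)]
    | None => None
    end
  else None.

(* Main.v *)
Require Import Defs.
From mathcomp Require Import all_boot all_order all_algebra.
From mathcomp Require Import zify ring lra.
Import Order.TTheory GRing.Theory Num.Theory.
Local Open Scope ring_scope.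

Lemma rnd_exact (q d : int) (m : nat) : (0 < m)%N -> 2 * `|d| < m%:Z ->
  rnd (q * m%:Z + d) m = q.
Proof.
move=> m0 hd; rewrite /rnd.
have -> : 2 * (q * m%:Z + d) + m%:Z = q * (2 * m)%N%:Z + (2 * d + m%:Z).
  rewrite PoszM; ring.
rewrite divzMDl; last by rewrite eqz_nat; lia.
rewrite divz_small ?addr0 //.
apply/andP; split.
- move: hd; case: (ler0P d) => hd0 hd; lia.
- rewrite /absz /=. move: hd; case: (ler0P d) => hd0 hd; lia.
Qed.

Lemma coprime_divg (a b : nat) : (0 < gcdn a b)%N ->
  coprime (a %/ gcdn a b) (b %/ gcdn a b).
Proof.
move=> g0; rewrite /coprime.
have := div.muln_gcdl (a %/ gcdn a b)%N (b %/ gcdn a b)%N (gcdn a b).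
rewrite !divnK ?dvdn_gcdl ?dvdn_gcdr // => h.
apply/eqP; apply/eqP; rewrite -(eqn_pmul2r g0) mul1n; apply/eqP; exact: h.
Qed.

Lemma xihat_mod P k x i (nk ni : nat) : (0 < gcdn (nth 0%N P k) (nth 0%N P i))%N ->
  qhat P k x i = (nk * Gki P k i)%N%:Z - (ni * Gik P k i)%N%:Z ->
  modz (xihat P k x i) (Gik P k i)%:Z = modz nk%:Z (Gik P k i)%:Z.
Proof.
move=> g0 hq; rewrite /xihat modz_mod /barG.
case: egcdzP => u v huv _.
have hg : gcdz (Gki P k i)%:Z (Gik P k i)%:Z = 1.
  have := coprime_divg _ _ g0; rewrite /coprime => /eqP h.
  by rewrite /gcdz /= /Gki /Gik /mki h.
rewrite hg in huv.
rewrite hq !PoszM.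
have -> : ((nk%:Z * (Gki P k i)%:Z) - (ni%:Z * (Gik P k i)%:Z)) * u
   = (- nk%:Z * v - ni%:Z * u) * (Gik P k i)%:Z + nk%:Z * (u * (Gki P k i)%:Z + v * (Gik P k i)%:Z).
  ring.
by rewrite huv mulr1 modzMDl.
Qed.

Lemma foldr_lcm_dvd (f : nat -> nat) (s : seq nat) (c : nat) :
  (foldr (fun i acc => lcmn (f i) acc) 1%N s %| c)%N = all (fun i => f i %| c)%N s.
Proof. by elim: s => [|a s IH] /=; rewrite ?dvd1n // dvdn_lcm IH. Qed.

Lemma dvd_foldr_lcm (f : nat -> nat) (s : seq nat) i :
  i \in s -> (f i %| foldr (fun i acc => lcmn (f i) acc) 1%N s)%N.
Proof.
elim: s => [|a s IH] //=; rewrite inE => /orP [/eqP -> | /IH h].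
  exact: dvdn_lcml.
exact: dvdn_trans h (dvdn_lcmr _ _).
Qed.

Lemma foldr_lcm_gt0 (f : nat -> nat) (s : seq nat) :
  all (fun i => 0 < f i)%N s -> (0 < foldr (fun i acc => lcmn (f i) acc) 1%N s)%N.
Proof. by elim: s => [|a s IH] //= /andP [h1 h2]; rewrite lcmn_gt0 h1 IH. Qed.

Lemma lcml_dvd (s : seq nat) (c : nat) : (lcml s %| c)%N = all (fun i => i %| c)%N s.
Proof. by elim: s => [|a s IH] /=; rewrite ?dvd1n // dvdn_lcm IH. Qed.

Lemma dvd_lcml (s : seq nat) i : i \in s -> (i %| lcml s)%N.
Proof.
elim: s => [|a s IH] //=; rewrite inE => /orP [/eqP -> | /IH h].
  exact: dvdn_lcml.
exact: dvdn_trans h (dvdn_lcmr _ _).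
Qed.

Lemma lcml_gt0 (s : seq nat) : all (fun i => 0 < i)%N s -> (0 < lcml s)%N.
Proof. by elim: s => [|a s IH] //= /andP [h1 h2]; rewrite lcmn_gt0 h1 IH. Qed.

Lemma algA_ok P k x X :
  all (fun m => 0 < m)%N P -> (k < size P)%N -> (X < lcml P)%N ->
  (forall i, (i < size P)%N -> i != k ->
     2 * `|(x`_i - (X %% nth 0%N P i)%N%:Z) - (x`_k - (X %% nth 0%N P k)%N%:Z)|
       < (gcdn (nth 0%N P k) (nth 0%N P i))%:Z) ->
  algA P k x = Some [seq (X %/ nth 0%N P i)%N%:Z | i <- iota 0 (size P)].
Proof.
move=> hP hk hX herr.
set p := nth 0%N P.
have pos : forall i, (i < size P)%N -> (0 < p i)%N.
  by move=> i hi; apply: (allP hP); apply: mem_nth.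
set nk := (X %/ p k)%N.
have hg : forall i, (i < size P)%N -> (0 < gcdn (p k) (p i))%N.
  by move=> i hi; rewrite gcdn_gt0 pos.
have eGki : forall i, p k = (Gki P k i * mki P k i)%N.
  by move=> i; rewrite /Gki /mki divnK ?dvdn_gcdl.
have eGik : forall i, p i = (Gik P k i * mki P k i)%N.
  by move=> i; rewrite /Gik /mki divnK ?dvdn_gcdr.
have hq : forall i, (i < size P)%N -> i != k ->
   qhat P k x i = (nk * Gki P k i)%N%:Z - ((X %/ p i) * Gik P k i)%N%:Z.
  move=> i hi hik; rewrite /qhat.
  set m := mki P k i.
  have -> : x`_i - x`_k = ((nk * Gki P k i)%N%:Z - ((X %/ p i) * Gik P k i)%N%:Z) * m%:Z
       + ((x`_i - (X %% p i)%N%:Z) - (x`_k - (X %% p k)%N%:Z)).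
    have Ei : (X %% p i)%N%:Z = X%:Z - ((X %/ p i) * Gik P k i * m)%N%:Z.
      rewrite -mulnA -eGik {2}(divn_eq X (p i)) PoszD; ring.
    have Ek : (X %% p k)%N%:Z = X%:Z - (nk * Gki P k i * m)%N%:Z.
      rewrite -mulnA -eGki {2}(divn_eq X (p k)) PoszD; ring.
    rewrite Ei Ek !PoszM; ring.
  apply: rnd_exact; first exact: hg.
  exact: herr.
have hc : forall y, congr_ok P k x y =
    all (fun i => modz y%:Z (Gik P k i)%:Z == modz nk%:Z (Gik P k i)%:Z) (others P k).
  move=> y; apply: eq_in_all => i; rewrite mem_filter mem_iota /= => /andP [hik hi].
  by rewrite (xihat_mod _ _ _ _ _ _ (hg i hi) (hq i hi hik)).
set B := bound P k.
have Gpos : forall i, (i < size P)%N -> (0 < Gik P k i)%N.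
  move=> i hi; have := pos i hi; rewrite (eGik i) muln_gt0 => /andP [] //.
have B0 : (0 < B)%N.
  apply: foldr_lcm_gt0; apply/allP => i; rewrite mem_filter mem_iota /= => /andP [_ hi].
  exact: Gpos.
have hnk : (nk < B)%N.
  rewrite /nk ltn_divLR; last exact: pos.
  apply: (leq_trans hX); apply: dvdn_leq; first by rewrite muln_gt0 B0 pos.
  rewrite lcml_dvd; apply/allP => a /(nthP 0%N) [i hi <-].
  case: (eqVneq i k) => [-> | hik]; first exact: dvdn_mull.
  rewrite -/p (eGik i); apply: dvdn_mul.
    by apply: dvd_foldr_lcm; rewrite mem_filter mem_iota /= hik hi.
  exact: dvdn_gcdl.
have cnk : congr_ok P k x nk by rewrite hc; apply/allP => i _.
have hfind : nkhat P k x = nk.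
  rewrite /nkhat -/B.
  have hhas : has (congr_ok P k x) (iota 0 B).
    by apply/hasP; exists nk => //; rewrite mem_iota.
  have hj := hhas; rewrite has_find size_iota in hj.
  set j := find _ _ in hj *.
  have cj : congr_ok P k x j.
    by have := nth_find 0%N hhas; rewrite nth_iota.
  case: (ltngtP j nk) => // h.
  - exfalso.
    have : (B %| nk - j)%N.
      rewrite foldr_lcm_dvd; apply/allP => i hi.
      move: cj; rewrite hc => /allP /(_ i hi) /eqP; rewrite !modz_nat => -[] e.
      by rewrite -eqn_mod_dvd ?(ltnW h) // e.
    move/dvdn_leq; rewrite subn_gt0 h => /(_ isT); lia.
  - exfalso.
    have := before_find 0%N h; rewrite nth_iota // add0n cnk //.
rewrite /algA hfind hnk; congr Some.
apply/eq_in_map => i; rewrite mem_iota add0n => /andP [_ hi].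
case: (eqVneq i k) => [-> // | hik].
rewrite hq // opprB addrC subrK.
by rewrite PoszM mulzK // eqz_nat -lt0n Gpos.
Qed.

Lemma sumz_const (L : nat) (c : int) : \sum_(i < L) c = L%:Z * c.
Proof. by rewrite sumr_const card_ord -mulr_natl natz. Qed.

Lemma Nhat_ok (R : realFieldType) (Mj : seq nat) (rtj : nat -> nat) (t : R) (Y : nat) :
  (1 <= size Mj)%N -> all (fun m => 0 < m)%N Mj ->
  (forall i, (i < size Mj)%N -> `|(rtj i)%:R - (Y %% nth 0%N Mj i)%N%:R| <= t) ->
  `|(Nhat Mj rtj [seq (Y %/ nth 0%N Mj i)%N%:Z | i <- iota 0 (size Mj)] - Y%:Z)%:~R| <= t.
Proof.
move=> hL hP herr.
set L := size Mj.
set e := fun i : nat => (rtj i)%:Z - (Y %% nth 0%N Mj i)%N%:Z.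
have he : forall i, (i < L)%N -> `|(e i)%:~R| <= t.
  move=> i hi; rewrite /e intrB; exact: herr.
set S := \sum_(i < L) e i.
have hsum : \sum_(i < L) ([seq (Y %/ nth 0%N Mj i)%N%:Z | i <- iota 0 L]`_i
      * (nth 0%N Mj i)%:Z + (rtj i)%:Z) = L%:Z * Y%:Z + S.
  rewrite /S -sumz_const -big_split /=.
  apply: eq_bigr => i _.
  rewrite (nth_map 0%N) ?size_iota // nth_iota // add0n /e.
  have hY : Y%:Z = (Y %/ nth 0%N Mj i)%N%:Z * (nth 0%N Mj i)%:Z + (Y %% nth 0%N Mj i)%N%:Z.
    by rewrite {1}(divn_eq Y (nth 0%N Mj i)) PoszD PoszM.
  rewrite [X in _ = X + _]hY; ring.
rewrite /Nhat -/L hsum /rnd.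
have -> : 2 * (L%:Z * Y%:Z + S) + L%:Z = Y%:Z * (2 * L)%N%:Z + (2 * S + L%:Z).
  rewrite PoszM; ring.
have L0 : (2 * L)%N%:Z != 0 by rewrite eqz_nat; lia.
rewrite divzMDl // addrC addKr.
set E := divz _ _.
have h1 := lez_floor (2 * S + L%:Z) L0.
have h2 := ltz_ceil (2 * S + L%:Z) (_ : 0 < (2 * L)%N%:Z); rewrite -/E in h1 h2.
have {h2}h2 := h2 ltac:(rewrite ltz_nat; lia).
rewrite ler_norml; apply/andP; split.
- case: (lerP (- t) E%:~R) => // hlt; exfalso.
  have hS : L%:Z * (E + 1) <= S.
    rewrite /S -sumz_const; apply: ler_sum => i _.
    have := he i (ltn_ord i); rewrite ler_norml => /andP [hi _].
    have : E%:~R < (e i)%:~R :> R by apply: lt_le_trans hi.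
    rewrite ltr_int; lia.
  nia.
- case: (lerP E%:~R t) => // hlt; exfalso.
  have hS : S <= L%:Z * (E - 1).
    rewrite /S -sumz_const; apply: ler_sum => i _.
    have := he i (ltn_ord i); rewrite ler_norml => /andP [_ hi].
    have : (e i)%:~R < E%:~R :> R by apply: le_lt_trans hi hlt.
    rewrite ltr_int; lia.
  nia.
Qed.

Lemma int_err (R : realFieldType) (a b : int) (ta tb : R) (g : nat) :
  `|a%:~R| <= ta -> `|b%:~R| <= tb -> 2 * ta + 2 * tb < g%:R ->
  2 * `|a - b| < g%:Z.
Proof.
move=> ha hb hg; rewrite -(ltr_int R) intrM intr_norm intrB.
have h2 : (2 : int)%:~R = 2 :> R by [].
have hn := ler_normB (a%:~R : R) b%:~R.
rewrite h2; change (g%:Z%:~R) with (g%:R : R); lra.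
Qed.

Lemma map_iota_nth (T1 T2 : Type) (x0 : T1) (f : T1 -> T2) (s : seq T1) :
  [seq f x | x <- s] = [seq f (nth x0 s i) | i <- iota 0 (size s)].
Proof. by rewrite -{1}(mkseq_nth x0 s) /mkseq -map_comp. Qed.

Lemma div_split (N D m : nat) : (0 < m)%N -> (m %| D)%N ->
  (N %/ m = N %/ D * (D %/ m) + (N %% D) %/ m)%N.
Proof.
move=> m0 hmD; rewrite {1}(divn_eq N D) -{2}(divnK hmD) mulnA divnMDl //.
Qed.

Lemma minG_le (P : seq nat) i q : (q < size P)%N -> q != i ->
  (minG P i <= gcdn (nth 0%N P i) (nth 0%N P q))%N.
Proof.
move=> hq hqi; rewrite /minG -minEnat.
exact: (@bigmin_le_cond _ _ _ _ (Ordinal hq) (fun q : 'I_(size P) => q != i :> nat)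
   (fun q : 'I_(size P) => gcdn (nth 0%N P i) (nth 0%N P q))).
Qed.

Theorem corollary5 (R : realFieldType) (M : seq (seq nat)) (N : nat)
    (rt : nat -> nat -> nat) (tau : nat -> R) (ref : nat -> nat) (k : nat) :
  (2 <= size M)%N ->
  (forall j, (j < size M)%N -> (1 <= size (nth [::] M j))%N) ->
  (forall j, (j < size M)%N ->
     sorted ltn (nth [::] M j) /\ all (fun m => 0 < m)%N (nth [::] M j)) ->
  uniq (delta M) ->
  (N < lcml (delta M))%N ->
  (forall j, (j < size M)%N -> (2 <= size (nth [::] M j))%N ->
     (ref j < size (nth [::] M j))%N /\
     minG (nth [::] M j) (ref j) = maxmin (nth [::] M j)) ->
  (k < size M)%N ->
  minG (delta M) k = maxmin (delta M) ->
  (forall j i, (j < size M)%N -> (i < size (nth [::] M j))%N ->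
     (rt j i <= (nth 0%N (nth [::] M j) i) - 1)%N /\
     `|(rt j i)%:R - (N %% (nth 0%N (nth [::] M j) i))%:R| <= tau j) ->
  4 * tau k < Num.min (G4 (nth [::] M k))%:R (maxmin (delta M))%:R ->
  (forall j, (j < size M)%N -> j != k ->
     4 * tau j < Num.min (G4 (nth [::] M j))%:R
       (2 * (gcdn (nth 0%N (delta M) j) (nth 0%N (delta M) k))%:R
        - Num.min (G4 (nth [::] M k))%:R (maxmin (delta M))%:R)) ->
  twostage M rt ref k = Some [seq [seq (N %/ m)%:Z | m <- Mj] | Mj <- M].
Proof.
move=> hs hL hsort huniq hN href hk hkmin htau htk htj.
have pos : forall j, (j < size M)%N -> all (fun m => 0 < m)%N (nth [::] M j).
  by move=> j hj; case: (hsort j hj).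
have posi : forall j i, (j < size M)%N -> (i < size (nth [::] M j))%N ->
    (0 < nth 0%N (nth [::] M j) i)%N.
  by move=> j i hj hi; apply: (allP (pos j hj)); apply: mem_nth.
have hd : forall j, (j < size M)%N -> nth 0%N (delta M) j = lcml (nth [::] M j).
  by move=> j hj; rewrite /delta (nth_map [::]).
have dvdd : forall j i, (j < size M)%N -> (i < size (nth [::] M j))%N ->
    (nth 0%N (nth [::] M j) i %| lcml (nth [::] M j))%N.
  by move=> j i hj hi; apply: dvd_lcml; apply: mem_nth.
have htau4 : forall j, (j < size M)%N -> 4 * tau j < (G4 (nth [::] M j))%:R.
  move=> j hj; case: (eqVneq j k) => [-> | hjk].
    by move: htk; rewrite lt_min => /andP [].
  by move: (htj j hj hjk); rewrite lt_min => /andP [].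
have herr : forall j i, (j < size M)%N -> (i < size (nth [::] M j))%N ->
    `|(rt j i)%:R - ((N %% lcml (nth [::] M j)) %% nth 0%N (nth [::] M j) i)%N%:R| <= tau j.
  by move=> j i hj hi; rewrite (modn_dvdm N (dvdd j i hj hi)); case: (htau j i hj hi).
set Kf := fun j => [seq ((N %% lcml (nth [::] M j)) %/ nth 0%N (nth [::] M j) i)%N%:Z
                    | i <- iota 0 (size (nth [::] M j))].
have hst : forall j, (j < size M)%N -> stage1 M rt ref j = Some (Kf j).
  move=> j hj; rewrite /stage1.
  have m0 := posi j 0%N hj (hL j hj).
  case: (leqP 2 (size (nth [::] M j))) => h2.
  - have [hr hmin] := href j hj h2.
    apply: algA_ok.
    + exact: pos.
    + exact: hr.
    + by rewrite ltn_pmod // lcml_gt0 // pos.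
    move=> i hi hir.
    rewrite !(nth_map 0%N) ?size_iota // !nth_iota // !add0n.
    apply: (@int_err R _ _ (tau j) (tau j)).
    + by rewrite intrB; apply: herr.
    + by rewrite intrB; apply: herr.
    have := htau4 j hj; rewrite /G4 h2 -hmin.
    have := minG_le (nth [::] M j) (ref j) i hi hir.
    rewrite -(ler_nat R) => hle hlt; lra.
  - rewrite /Kf; move: h2 m0 (hL j hj).
    case: (nth [::] M j) => [|a [|b l]] //= _ a0 _.
    by rewrite lcmn1 divn_small // ltn_pmod.
rewrite /twostage.
have -> : [seq stage1 M rt ref j | j <- iota 0 (size M)] = [seq Some (Kf j) | j <- iota 0 (size M)].
  by apply/eq_in_map => j; rewrite mem_iota add0n => /andP [_ hj]; apply: hst.
rewrite all_map.
have -> : all (preim (fun j => Some (Kf j)) (fun o => o != None)) (iota 0 (size M)) by apply/allP.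
rewrite -map_comp /=.
set K := map (_ \o _) _.
have hK : forall j, (j < size M)%N -> nth [::] K j = Kf j.
  by move=> j hj; rewrite /K (nth_map 0%N) ?size_iota // nth_iota.
have hdpos : all (fun m => 0 < m)%N (delta M).
  rewrite /delta all_map; apply/allP => Mj /(nthP [::]) [j hj <-] /=.
  exact: lcml_gt0 (pos j hj).
have -> : algA (delta M) k
     [seq Nhat (nth [::] M j) (rt j) (nth [::] K j) | j <- iota 0 (size M)]
   = Some [seq (N %/ nth 0%N (delta M) j)%N%:Z | j <- iota 0 (size (delta M))].
  rewrite -{1}(size_map lcml M) -/(delta M).
  apply: algA_ok => //; first by rewrite size_map.
  move=> j; rewrite size_map => hj hjk.
  rewrite !(nth_map 0%N) ?size_iota // !nth_iota // !add0n /= /Kf.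
  apply: (@int_err R _ _ (tau j) (tau k)).
  + rewrite (hd j hj); apply: Nhat_ok; [exact: hL | exact: pos | move=> i hi; exact: herr].
  + rewrite hd //; apply: Nhat_ok; [exact: hL | exact: pos | move=> i hi; exact: herr].
  have := htj j hj hjk; rewrite lt_min => /andP [_ h1].
  have h2 := htk.
  rewrite gcdnC; move: h1 h2.
  set g := (gcdn _ _)%:R; set mu := Num.min _ _ => h1 h2.
  lra.
congr Some.
rewrite (map_iota_nth _ _ [::] _ M); apply/eq_in_map => j; rewrite mem_iota add0n => /andP [_ hj].
rewrite (map_iota_nth _ _ 0%N _ (nth [::] M j)); apply/eq_in_map => i.
rewrite mem_iota add0n => /andP [_ hi].
rewrite (nth_map 0%N) ?size_iota ?size_map // nth_iota // add0n hK // /Kf.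
rewrite (nth_map 0%N) ?size_iota // nth_iota // add0n (hd j hj).
by rewrite (div_split N (lcml (nth [::] M j)) _ (posi j i hj hi) (dvdd j i hj hi)) PoszD PoszM.
Qed.
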